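(* Let $\mathcal{X}\subset\mathbb{R}^N$ be convex and compact, and let $f_t,f_{t+1}:\mathbb{R}^N\to\mathbb{R}$ be differentiable convex functions such that $|f_t(\mathbf{x})-f_{t+1}(\mathbf{x})|\le\Delta$ for all $\mathbf{x}\in\mathcal{X}$, for some $\Delta<\infty$. Let $\bar{\mathbf{x}}_{t+1}\in\mathcal{X}$, and let $\mathbf{g}_t\in\mathbb{R}^N$ and $\epsilon>0$ satisfy $\|\mathbf{g}_t-\nabla f_{t+1}(\bar{\mathbf{x}}_{t+1})\|\le\epsilon$, with $\|\mathbf{g}_t\|>\epsilon$. Fix $\zeta>0$, $\beta\in(0,1)$ and $M\in\mathbb{N}$, and let $\mathbf{d}_{t+1}=\mathrm{proj}_{\mathcal{X}}(\bar{\mathbf{x}}_{t+1}-\zeta\mathbf{g}_t)-\bar{\mathbf{x}}_{t+1}$. Run the following backtracking line search: let $m$ be the smallest integer in $\{0,1,\dots,M\}$ such that $$f_t(\bar{\mathbf{x}}_{t+1}+\beta^m\mathbf{d}_{t+1})\le f_t(\bar{\mathbf{x}}_{t+1})+\beta^m\big(\mathbf{g}_t^\top\mathbf{d}_{t+1}-\epsilon\|\mathbf{d}_{t+1}\|\big)-2\Delta,$$ and return step size $\beta^m$; if no such $m$ exists, return step size $0$. If the line search terminates with a step size $\beta^m>0$, then the predictive update $\mathbf{x}_{t+1}=\bar{\mathbf{x}}_{t+1}+\beta^m\mathbf{d}_{t+1}$ satisfies the modified Armijo condition $$f_{t+1}(\bar{\mathbf{x}}_{t+1}+\beta^m\mathbf{d}_{t+1})\le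 f_{t+1}(\bar{\mathbf{x}}_{t+1})+\beta^m\nabla f_{t+1}(\bar{\mathbf{x}}_{t+1})^\top\mathbf{d}_{t+1},$$ and hence leads to a sufficient decrease in the loss function.
   Context: $\|\cdot\|$ is the Euclidean norm and $\mathrm{proj}_{\mathcal{X}}(\mathbf{x})\in\arg\min_{\mathbf{y}\in\mathcal{X}}\|\mathbf{x}-\mathbf{y}\|$. In the paper's online setting, $\bar{\mathbf{x}}_{t+1}$ is the decision computed by an online convex optimization update at round $t$ after $f_t$ is revealed, $\mathbf{g}_t$ is an estimate of the gradient of the (not yet revealed) next loss $f_{t+1}$ at $\bar{\mathbf{x}}_{t+1}$ with error at most $\epsilon$, and $\Delta$ is a time-Lipschitz constant of the loss sequence. *)

(* Defs.v *)
From HB Require Import structures.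
From mathcomp Require Import all_boot all_order all_algebra.
From mathcomp Require Import all_classical all_reals all_analysis.
Set Implicit Arguments. Unset Strict Implicit. Unset Printing Implicit Defensive.
Import Order.TTheory GRing.Theory Num.Theory.
Import numFieldNormedType.Exports.
Local Open Scope ring_scope.
Local Open Scope classical_set_scope.

Definition dotp {R : realType} {N : nat} (u v : 'rV[R]_N) : R :=
  \sum_(i < N) u 0 i * v 0 i.
Definition enorm {R : realType} {N : nat} (u : 'rV[R]_N) : R :=
  Num.sqrt (dotp u u).

Definition grad {R : realType} {N : nat} (f : 'rV[R]_N -> R) (x : 'rV[R]_N)
  : 'rV[R]_N := \row_i ('D_(delta_mx 0 i) f x).

Definition is_proj {R : realType} {N : nat} (X : set 'rV[R]_N) (y p : 'rV[R]_N)
  : Prop := X p /\ forall z, X z -> enorm (y - p) <= enorm (y - z).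

Definition ls_cond {R : realType} {N : nat} (ft : 'rV[R]_N -> R)
  (xbar g d : 'rV[R]_N) (beta eps Delta : R) (m : nat) : Prop :=
  ft (xbar + beta ^+ m *: d) <=
    ft xbar + beta ^+ m * (dotp g d - eps * enorm d) - 2 * Delta.

(* Main.v *)
Require Import Defs.
From HB Require Import structures.
From mathcomp Require Import all_boot all_order all_algebra.
From mathcomp Require Import all_classical all_reals all_analysis.
From mathcomp Require Import ring lra.
Import Order.TTheory GRing.Theory Num.Theory.
Import numFieldNormedType.Exports.
Local Open Scope ring_scope.
Local Open Scope classical_set_scope.

Lemma dotp_ge0 (R : realType) (N : nat) (u : 'rV[R]_N) : 0 <= dotp u u.
Proof. by apply: sumr_ge0 => i _; rewrite -expr2 sqr_ge0. Qed.

Lemma dotp_self0 (R : realType) (N : nat) (u v : 'rV[R]_N) :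
  enorm u = 0 -> dotp u v = 0.
Proof.
move=> /eqP; rewrite /enorm sqrtr_eq0 => h.
have h0 : dotp u u = 0 by apply/eqP; rewrite eq_le h dotp_ge0.
have := h0; rewrite /dotp => /psumr_eq0P H.
apply: big1 => i _.
have /eqP : u 0 i * u 0 i = 0 by apply: H => // j _; rewrite -expr2 sqr_ge0.
by rewrite mulf_eq0 orbb => /eqP ->; rewrite mul0r.
Qed.

Lemma dotpC (R : realType) (N : nat) (u v : 'rV[R]_N) : dotp u v = dotp v u.
Proof. by apply: eq_bigr => i _; rewrite mulrC. Qed.

Lemma cs (R : realType) (N : nat) (u v : 'rV[R]_N) :
  dotp u v <= enorm u * enorm v.
Proof.
set a := enorm u; set b := enorm v.
have a0 : 0 <= a by apply: sqrtr_ge0.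
have b0 : 0 <= b by apply: sqrtr_ge0.
have [ae|an0] := eqVneq a 0; first by rewrite dotp_self0 // ae mul0r.
have [be|bn0] := eqVneq b 0; first by rewrite dotpC dotp_self0 // be mulr0.
have Ea : a ^+ 2 = dotp u u by rewrite sqr_sqrtr ?dotp_ge0.
have Eb : b ^+ 2 = dotp v v by rewrite sqr_sqrtr ?dotp_ge0.
have S : 0 <= \sum_(i < N) (b * u 0 i - a * v 0 i) ^+ 2
  by apply: sumr_ge0 => i _; rewrite sqr_ge0.
have E : \sum_(i < N) (b * u 0 i - a * v 0 i) ^+ 2 =
   b ^+ 2 * dotp u u - 2 * a * b * dotp u v + a ^+ 2 * dotp v v.
  rewrite /dotp !mulr_sumr -sumrB -big_split /=.
  by apply: eq_bigr => i _; ring.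
rewrite E -Ea -Eb in S.
have ap : 0 < a by rewrite lt_neqAle eq_sym an0 a0.
have bp : 0 < b by rewrite lt_neqAle eq_sym bn0 b0.
have abp : 0 < a * b by apply: mulr_gt0.
have : 0 <= (2 * a * b) * (a * b - dotp u v).
  by move: S; set w := dotp u v => S; nra.
by rewrite pmulr_rge0 ?subr_ge0 // mulr_gt0 // mulr_gt0.
Qed.

Theorem lemma4 (R : realType) (N : nat) (X : set 'rV[R]_N)
  (ft ft1 : 'rV[R]_N -> R) (Delta : R) (xbar g : 'rV[R]_N) (eps zeta beta : R)
  (M : nat) (p : 'rV[R]_N) (m : nat) :
  convex_set X -> compact X ->
  (forall x, differentiable ft x) -> (forall x, differentiable ft1 x) ->
  convex_function setT ft -> convex_function setT ft1 ->
  (forall x, X x -> `|ft x - ft1 x| <= Delta) ->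
  X xbar ->
  0 < eps -> enorm (g - grad ft1 xbar) <= eps -> eps < enorm g ->
  0 < zeta -> 0 < beta < 1 ->
  is_proj X (xbar - zeta *: g) p ->
  (* the line search returns beta^m: m is the least element of {0..M}
     satisfying the test *)
  (m <= M)%N ->
  ls_cond ft xbar g (p - xbar) beta eps Delta m ->
  (forall k, (k < m)%N -> ~ ls_cond ft xbar g (p - xbar) beta eps Delta k) ->
  0 < beta ^+ m ->
  ft1 (xbar + beta ^+ m *: (p - xbar)) <=
    ft1 xbar + beta ^+ m * dotp (grad ft1 xbar) (p - xbar).
Proof.
move=> cX _ _ _ _ _ HD Xx e0 Hg _ _ /andP[b0 b1] [Xp _] _ ls _ sp.
rewrite /ls_cond in ls.
set s := beta ^+ m in ls sp *.
set d := p - xbar in ls *.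
have s1 : s <= 1 by rewrite exprn_ile1 // ltW.
have Xy : X (xbar + s *: d).
  have := cX p xbar (Itv01 (ltW sp) s1).
  rewrite !in_setE => /(_ Xp Xx).
  congr X.
  rewrite /d /=.
  change (s *: p + (1 - s) *: xbar = xbar + s *: (p - xbar)).
  by rewrite scalerBl scale1r scalerBr addrCA addrC; congr (_ + _).
have H1 := HD _ Xy; have H2 := HD _ Xx.
have H1' : ft1 (xbar + s *: d) - ft (xbar + s *: d) <= Delta
  by rewrite -opprB normrN in H1; exact: le_trans (ler_norm _) H1.
have H2' : ft xbar - ft1 xbar <= Delta by exact: le_trans (ler_norm _) H2.
have Hlin : dotp g d - dotp (grad ft1 xbar) d = dotp (g - grad ft1 xbar) d.
  by rewrite /dotp -sumrB; apply: eq_bigr => i _; rewrite !mxE mulrBl.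
have Hcs := @cs R N (g - grad ft1 xbar) d.
have nd0 : 0 <= enorm d by apply: sqrtr_ge0.
have Hk : dotp g d - eps * enorm d <= dotp (grad ft1 xbar) d.
  have : enorm (g - grad ft1 xbar) * enorm d <= eps * enorm d
    by rewrite ler_wpM2r.
  lra.
have := ler_wpM2l (ltW sp) Hk.
lra.
Qed.
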